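(* Let $n,m$ be such that $\Gamma_{n,m}$ is defined, and consider a nearest-neighbour random walk on $\Gamma_{n,m}$ whose step distribution $\mu$ on $\{r_1,\dots,r_n\}$ satisfies $\mu(r_i)>0$ for all $1\le i\le n$. Let $g\in\Gamma_{n,m}$ be hyperbolic, i.e. there is a geodesic line $\xi\subset\mathbb{H}^2$ and $L>0$ with $d_{\mathbb{H}^2}(x,g.x)=L$ for all $x\in\xi$. Suppose $g=s_1\cdots s_{|g|}$ with each $s_j\in\{r_1,\dots,r_n\}$, where $|g|$ is the word length of $g$ with respect to $\{r_1,\dots,r_n\}$, and suppose \[ L > -\sum_{j=1}^{|g|}\log\mu(s_j). \] Then for any choice of base point $x_0\in\mathbb{H}^2$ (with trivial stabilizer) defining the geometric distance $d_{\mathbb{H}^2}$, \[ \sup_{k\ge 1}\,\bigl| d_\mu(e,g^k)-d_{\mathbb{H}^2}(e,g^k)\bigr| = \infty . \]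
   Context: $\Delta_{n,m}$ is a regular hyperbolic polygon with $n$ sides and interior angles $\frac{2\pi}{m}$ ($m\ge4$ even); $\Gamma_{n,m}$ is the group generated by the reflections $r_1,\dots,r_n$ in its sides. Geometric distance: for $x_0\in\mathbb{H}^2$ with trivial stabilizer, $d_{\mathbb{H}^2}(g,h)=d_{\mathbb{H}^2}(g.x_0,h.x_0)$. The random walk is $X_k=\xi_1\cdots\xi_k$, $X_0=e$, $\xi_i$ i.i.d. with law $\mu$. The first-entrance function is $F_\mu(x,y)=\mathbb{P}^e(\exists k: X_k=x^{-1}y)$ and the Green metric is $d_\mu(x,y)=-\log F_\mu(x,y)$. *)

(* Defs.v *)
From Stdlib Require Import Reals Lra List Arith ClassicalDescription.
From Coquelicot Require Import Coquelicot.
Import ListNotations.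
Open Scope R_scope.

Definition vec := (R * R * R)%type.

Definition vadd (x y : vec) : vec :=
  let '(a1, a2, a3) := x in let '(b1, b2, b3) := y in (a1 + b1, a2 + b2, a3 + b3).
Definition vscale (c : R) (x : vec) : vec :=
  let '(a1, a2, a3) := x in (c * a1, c * a2, c * a3).

Definition lor (x y : vec) : R :=
  let '(a1, a2, a3) := x in let '(b1, b2, b3) := y in a1 * b1 + a2 * b2 - a3 * b3.

(** Points of the hyperbolic plane: upper sheet of the hyperboloid. *)
Definition H2 (x : vec) : Prop := lor x x = -1 /\ 0 < snd x.

Definition acosh (t : R) : R := ln (t + sqrt (t * t - 1)).

Definition hdist (x y : vec) : R := acosh (- lor x y).

(** Geodesic lines of H^2: intersections of H^2 with the Lorentz-orthogonal
    complement of a spacelike vector v. *)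
Definition geodesic_line (v : vec) : vec -> Prop := fun x => H2 x /\ lor x v = 0.

(** Reflection in the geodesic orthogonal to a spacelike unit vector v. *)
Definition refl (v : vec) (x : vec) : vec := vadd x (vscale (- (2 * lor x v)) v).

(** Gamma_{n,m} is defined: n >= 3 sides, m >= 4 even, and the regular
    n-gon with interior angles 2pi/m exists in H^2, i.e. n*(2pi/m) < (n-2)pi. *)
Definition Gamma_defined (n m : nat) : Prop :=
  (3 <= n)%nat /\ (4 <= m)%nat /\ Nat.Even m /\ (2 * n < m * (n - 2))%nat.

(** Regular n-gon centred at (0,0,1) with interior angles 2pi/m: its sides
    lie on the geodesics orthogonal to the unit spacelike vectors
    nv i = (cosh rho cos(2 pi i/n), cosh rho sin(2 pi i/n), sinh rho), where the
    inradius rho is given by cosh rho = cos(pi/m) / sin(pi/n).  Then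
    <nv i, nv (i+1)> = - cos(2 pi/m), i.e. adjacent sides meet at angle 2pi/m. *)
Definition ch_rho (n m : nat) : R := cos (PI / INR m) / sin (PI / INR n).
Definition sh_rho (n m : nat) : R := sqrt (ch_rho n m * ch_rho n m - 1).

Definition nv (n m : nat) (i : nat) : vec :=
  (ch_rho n m * cos (2 * PI * INR i / INR n),
   ch_rho n m * sin (2 * PI * INR i / INR n),
   sh_rho n m).

(** The generators r_i (i < n), reflections in the sides of Delta_{n,m};
    group elements are isometries, represented as maps vec -> vec. *)
Definition gen (n m : nat) (i : nat) : vec -> vec := refl (nv n m i).

Definition valid_word (n : nat) (w : list nat) : Prop := List.Forall (fun i => (i < n)%nat) w.

Fixpoint weval (n m : nat) (w : list nat) : vec -> vec :=
  match w with
  | [] => fun x => x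
  | i :: w' => fun x => gen n m i (weval n m w' x)
  end.

Definition in_Gamma (n m : nat) (g : vec -> vec) : Prop :=
  exists w, valid_word n w /\ weval n m w = g.

Definition word_length_is (n m : nat) (g : vec -> vec) (k : nat) : Prop :=
  (exists w, valid_word n w /\ length w = k /\ weval n m w = g) /\
  (forall w, valid_word n w -> weval n m w = g -> (k <= length w)%nat).

Definition hyperbolic_with (g : vec -> vec) (L : R) : Prop :=
  0 < L /\ exists v, 0 < lor v v /\
    forall x, geodesic_line v x -> hdist x (g x) = L.

Definition gpow (g : vec -> vec) (k : nat) : vec -> vec :=
  Nat.iter k (fun f => fun x => g (f x)) (fun x => x).

Fixpoint words (n k : nat) : list (list nat) :=
  match k with
  | O => [[]]
  | S k' => flat_map (fun i => map (cons i) (words n k')) (seq 0 n)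
  end.

Definition sumR (l : list R) : R := fold_right Rplus 0 l.
Definition prodR (l : list R) : R := fold_right Rmult 1 l.

Definition indic (P : Prop) : R := if excluded_middle_informative P then 1 else 0.

(** The trajectory xi_1 ... xi_k of the walk first hits x at time |w|
    exactly when the increments are w, eval w = x and no proper prefix
    evaluates to x.  The probability of that event is prod mu(w_j). *)
Definition first_hit_weight (n m : nat) (mu : nat -> R) (x : vec -> vec)
    (w : list nat) : R :=
  indic (weval n m w = x /\
         forall j, (j < length w)%nat -> weval n m (firstn j w) <> x)
  * prodR (map mu w).

(** P^e(exists k <= N, X_k = x). *)
Definition hit_upto (n m : nat) (mu : nat -> R) (x : vec -> vec) (N : nat) : R :=
  sumR (map (fun k => sumR (map (first_hit_weight n m mu x) (words n k)))
            (seq 0 (S N))).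

Definition hit_prob (n m : nat) (mu : nat -> R) (x : vec -> vec) : R :=
  real (Lim_seq (hit_upto n m mu x)).

(** First-entrance function F_mu(x,y) = P^e(exists k, X_k = x^{-1} y) and
    Green metric d_mu = - log F_mu; we only need x = e. *)
Definition F_mu_e (n m : nat) (mu : nat -> R) (y : vec -> vec) : R := hit_prob n m mu y.
Definition d_mu_e (n m : nat) (mu : nat -> R) (y : vec -> vec) : R :=
  - ln (F_mu_e n m mu y).

Definition d_geo_e (x0 : vec) (y : vec -> vec) : R := hdist x0 (y x0).

Definition trivial_stabilizer (n m : nat) (x0 : vec) : Prop :=
  forall w, valid_word n w -> weval n m w x0 = x0 -> weval n m w = (fun x => x).

(* Main.v *)
Require Import Defs.
From Stdlib Require Import Reals List Lra Psatz Lia ClassicalDescription.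
From Coquelicot Require Import Coquelicot.
Import ListNotations.
Open Scope R_scope.

Ltac dv x := let a := fresh "a" in let b := fresh "b" in let c := fresh "c" in destruct x as [[a b] c].

Lemma lor_sym x y : lor x y = lor y x.
Proof. dv x; dv y; simpl; ring. Qed.

Definition comb (e0 e1 u : vec) (p q r : R) : vec :=
  vadd (vscale p e0) (vadd (vscale q e1) (vscale r u)).

Lemma lor_comb_l e0 e1 u p q r y :
  lor (comb e0 e1 u p q r) y = p * lor e0 y + q * lor e1 y + r * lor u y.
Proof. dv e0; dv e1; dv u; dv y; simpl; ring. Qed.

Lemma lor_comb_r e0 e1 u p q r y :
  lor y (comb e0 e1 u p q r) = p * lor y e0 + q * lor y e1 + r * lor y u.
Proof. dv e0; dv e1; dv u; dv y; simpl; ring. Qed.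

Definition ONB (e0 e1 u : vec) : Prop :=
  lor e0 e0 = -1 /\ lor e1 e1 = 1 /\ lor u u = 1 /\
  lor e0 e1 = 0 /\ lor e0 u = 0 /\ lor e1 u = 0.

Lemma lor_comb_comb e0 e1 u p q r p' q' r' : ONB e0 e1 u ->
  lor (comb e0 e1 u p q r) (comb e0 e1 u p' q' r') = - p * p' + q * q' + r * r'.
Proof.
  intros (H1&H2&H3&H4&H5&H6).
  rewrite lor_comb_l, !lor_comb_r.
  rewrite (lor_sym e1 e0), (lor_sym u e0), (lor_sym u e1), H1, H2, H3, H4, H5, H6. ring.
Qed.

Lemma expansion e0 e1 u x : ONB e0 e1 u ->
  x = comb e0 e1 u (- lor x e0) (lor x e1) (lor x u).
Proof.
  intros H. pose proof H as (H1&H2&H3&H4&H5&H6).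
  set (y := comb e0 e1 u (- lor x e0) (lor x e1) (lor x u)).
  assert (Y0 : lor e0 x = lor e0 y).
  { unfold y. rewrite lor_comb_r, H1, H4, H5, (lor_sym x e0). ring. }
  assert (Y1 : lor e1 x = lor e1 y).
  { unfold y. rewrite lor_comb_r, H2, (lor_sym e1 e0), H4, H6, (lor_sym x e1). ring. }
  assert (Y2 : lor u x = lor u y).
  { unfold y. rewrite lor_comb_r, H3, (lor_sym u e0), H5, (lor_sym u e1), H6, (lor_sym x u). ring. }
  clearbody y.
  revert H1 H2 H3 H4 H5 H6 Y0 Y1 Y2.
  dv e0; dv e1; dv u; dv x; dv y; simpl; intros H1 H2 H3 H4 H5 H6 Y0 Y1 Y2.
  (* rows of N : (a,b,-c) *)
  set (D := a * (b0 * (-c1) - (-c0) * b1) - b * (a0 * (-c1) - (-c0) * a1) + (-c) * (a0 * b1 - b0 * a1)).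
  assert (HD : D * D = 1).
  { assert (E : D * D = - ( (a*a+b*b-c*c) * ((a0*a0+b0*b0-c0*c0)*(a1*a1+b1*b1-c1*c1) - (a0*a1+b0*b1-c0*c1)*(a0*a1+b0*b1-c0*c1))
       - (a*a0+b*b0-c*c0) * ((a*a0+b*b0-c*c0)*(a1*a1+b1*b1-c1*c1) - (a0*a1+b0*b1-c0*c1)*(a*a1+b*b1-c*c1))
       + (a*a1+b*b1-c*c1) * ((a*a0+b*b0-c*c0)*(a0*a1+b0*b1-c0*c1) - (a0*a0+b0*b0-c0*c0)*(a*a1+b*b1-c*c1)))).
    { unfold D; ring. }
    rewrite E, H1, H2, H3, H4, H5, H6. ring. }
  assert (Z : forall t, D * t = 0 -> t = 0).
  { intros t Ht. assert (HH : D * (D * t) = 0) by (rewrite Ht; ring).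
    rewrite <- Rmult_assoc, HD in HH. lra. }
  assert (E0 : a*(a2-a3)+b*(b2-b3)-c*(c2-c3) = 0) by lra.
  assert (E1 : a0*(a2-a3)+b0*(b2-b3)-c0*(c2-c3) = 0) by lra.
  assert (E2 : a1*(a2-a3)+b1*(b2-b3)-c1*(c2-c3) = 0) by lra.
  f_equal; [f_equal|].
  - apply Rminus_diag_uniq. apply Z.
    transitivity ((b0 * (-c1) - (-c0) * b1) * (a*(a2-a3)+b*(b2-b3)-c*(c2-c3))
      + ((-c) * b1 - b * (-c1)) * (a0*(a2-a3)+b0*(b2-b3)-c0*(c2-c3))
      + (b * (-c0) - (-c) * b0) * (a1*(a2-a3)+b1*(b2-b3)-c1*(c2-c3))).
    + unfold D; ring.
    + rewrite E0, E1, E2; ring.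
  - apply Rminus_diag_uniq. apply Z.
    transitivity (((-c0) * a1 - a0 * (-c1)) * (a*(a2-a3)+b*(b2-b3)-c*(c2-c3))
      + ((-c1) * a - a1 * (-c)) * (a0*(a2-a3)+b0*(b2-b3)-c0*(c2-c3))
      + ((-c) * a0 - a * (-c0)) * (a1*(a2-a3)+b1*(b2-b3)-c1*(c2-c3))).
    + unfold D; ring.
    + rewrite E0, E1, E2; ring.
  - apply Rminus_diag_uniq. apply Z.
    transitivity ((a0 * b1 - b0 * a1) * (a*(a2-a3)+b*(b2-b3)-c*(c2-c3))
      + (a1 * b - b1 * a) * (a0*(a2-a3)+b0*(b2-b3)-c0*(c2-c3))
      + (a * b0 - b * a0) * (a1*(a2-a3)+b1*(b2-b3)-c1*(c2-c3))).
    + unfold D; ring.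
    + rewrite E0, E1, E2; ring.
Qed.

Definition lin (f : vec -> vec) : Prop :=
  (forall x y, f (vadd x y) = vadd (f x) (f y)) /\ (forall a x, f (vscale a x) = vscale a (f x)).
Definition isom (f : vec -> vec) : Prop := forall x y, lor (f x) (f y) = lor x y.

Lemma lin_comb f e0 e1 u p q r : lin f ->
  f (comb e0 e1 u p q r) = comb (f e0) (f e1) (f u) p q r.
Proof. intros [Ha Hs]. unfold comb. rewrite !Ha, !Hs. reflexivity. Qed.

Lemma ln_le' x y : 0 < x -> x <= y -> ln x <= ln y.
Proof. intros H1 H2. destruct (Rle_lt_or_eq_dec _ _ H2) as [H|H].
  - left; apply ln_increasing; auto. - subst; lra. Qed.

Lemma ln_nonpos x : x <= 0 -> ln x = 0.
Proof. intros H. unfold ln. case (Rlt_dec 0 x); intros; [exfalso; lra|reflexivity]. Qed.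

Lemma acosh_eq t L : 0 < L -> acosh t = L -> t = (exp L + / exp L) / 2.
Proof.
  intros HL H. unfold acosh in H.
  assert (HX : 1 < exp L) by (rewrite <- exp_0; apply exp_increasing; lra).
  destruct (Rle_lt_dec (t + sqrt (t * t - 1)) 0) as [Hs|Hs].
  { rewrite ln_nonpos in H; lra. }
  assert (E : t + sqrt (t * t - 1) = exp L) by (rewrite <- H, exp_ln; auto).
  destruct (Rle_lt_dec (t * t - 1) 0) as [Ht|Ht].
  { rewrite sqrt_neg_0 in E by lra. nra. }
  assert (Q : sqrt (t * t - 1) * sqrt (t * t - 1) = t * t - 1) by (apply sqrt_sqrt; lra).
  assert (Q2 : (exp L - t) * (exp L - t) = t * t - 1) by (rewrite <- Q; f_equal; lra).
  assert (T2 : t * (2 * exp L) = exp L * exp L + 1) by nra.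
  apply Rmult_eq_reg_r with (2 * exp L); [|lra].
  rewrite T2. field. lra.
Qed.

Lemma e1_third e0 e1 u : ONB e0 e1 u -> 0 < snd e0 -> snd e1 * snd e1 < snd e0 * snd e0.
Proof.
  intros (H1&H2&_&H4&_&_). revert H1 H2 H4. dv e0; dv e1; simpl; intros H1 H2 H4 Hc.
  assert (CS : (a*a0+b*b0)*(a*a0+b*b0) <= (a*a+b*b)*(a0*a0+b0*b0)).
  { assert (0 <= (a*b0-b*a0)*(a*b0-b*a0)) by apply Rle_0_sqr. nra. }
  replace (a*a0+b*b0) with (c*c0) in CS by lra.
  replace (a*a+b*b) with (c*c-1) in CS by lra.
  replace (a0*a0+b0*b0) with (c0*c0+1) in CS by lra.
  lra.
Qed.

Lemma snd_comb_pos e0 e1 u a b : 0 < snd e0 -> snd e1 * snd e1 < snd e0 * snd e0 ->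
  0 < a -> b * b < a * a -> 0 < snd (comb e0 e1 u a b 0).
Proof.
  unfold comb. dv e0; dv e1; dv u; simpl; intros H1 H2 H3 H4.
  assert (P1 : b * b * (c0 * c0) <= a * a * (c0 * c0)).
  { apply Rmult_le_compat_r; [apply Rle_0_sqr|lra]. }
  assert (P2 : a * a * (c0 * c0) < a * a * (c * c)).
  { apply Rmult_lt_compat_l; [nra|lra]. }
  assert (P : (b * c0) * (b * c0) < (a * c) * (a * c)) by nra.
  assert (0 < a * c) by nra.
  destruct (Rle_lt_dec (a * (c) + (b * c0 + 0 * c1)) 0) as [N|N]; [|exact N].
  exfalso. assert (a * c <= - (b * c0)) by lra. nra.
Qed.

Lemma comb_comb e0 e1 u a1 b1 c1 a2 b2 c2 a3 b3 c3 p q r :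
  comb (comb e0 e1 u a1 b1 c1) (comb e0 e1 u a2 b2 c2) (comb e0 e1 u a3 b3 c3) p q r =
  comb e0 e1 u (p*a1 + q*a2 + r*a3) (p*b1 + q*b2 + r*b3) (p*c1 + q*c2 + r*c3).
Proof. unfold comb. dv e0; dv e1; dv u; simpl. f_equal; [f_equal|]; ring. Qed.

Fixpoint CB (K b : R) (k : nat) : R * R :=
  match k with
  | O => (1, 0)
  | S k => let (c, s) := CB K b k in (K * c + b * s, b * c + K * s)
  end.

Lemma CB_sum K b k : fst (CB K b k) + snd (CB K b k) = (K + b) ^ k.
Proof. induction k; simpl; [lra|]. destruct (CB K b k) as [c s]; simpl in *. rewrite <- IHk. ring. Qed.
Lemma CB_diff K b k : fst (CB K b k) - snd (CB K b k) = (K - b) ^ k.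
Proof. induction k; simpl; [lra|]. destruct (CB K b k) as [c s]; simpl in *. rewrite <- IHk. ring. Qed.

Section Geo.
Variables (A : vec -> vec) (e0 e1 u : vec) (L : R).
Hypotheses (Alin : lin A) (Aiso : isom A) (HO : ONB e0 e1 u) (He0 : 0 < snd e0) (HL : 0 < L)
  (Hax : forall x, H2 x -> lor x u = 0 -> hdist x (A x) = L).

Let K := (exp L + / exp L) / 2.

Lemma geo_pt a b : a * a - b * b = 1 -> 0 < a -> b * b < a * a ->
  - lor (comb e0 e1 u a b 0) (A (comb e0 e1 u a b 0)) = K.
Proof.
  intros Hab Ha Hb.
  assert (HH : H2 (comb e0 e1 u a b 0)).
  { split. - rewrite lor_comb_comb by auto. lra.
    - apply snd_comb_pos; auto. apply e1_third with u; auto. }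
  assert (HU : lor (comb e0 e1 u a b 0) u = 0).
  { rewrite lor_comb_l. destruct HO as (_&_&H3&_&H5&H6). rewrite H3, H5, H6; ring. }
  pose proof (Hax _ HH HU) as E. unfold hdist in E. apply acosh_eq in E; [ | exact HL]. unfold K. lra.
Qed.


Lemma geo_quad a b : a * a - b * b = 1 -> 0 < a -> b * b < a * a ->
  - (a * a * lor (A e0) e0 + a * b * (lor (A e0) e1 + lor (A e1) e0) + b * b * lor (A e1) e1) = K.
Proof.
  intros H1 H2 H3. rewrite <- (geo_pt a b H1 H2 H3). f_equal.
  rewrite lin_comb by auto. rewrite lor_comb_r, !lor_comb_l.
  rewrite !(lor_sym e0), !(lor_sym e1), !(lor_sym u). ring.
Qed.

Let beta := lor (A e0) e1.

Lemma geo_struct : A e0 = comb e0 e1 u K beta 0 /\ A e1 = comb e0 e1 u beta K 0 /\  beta * beta = K * K - 1.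
Proof.
  pose proof (geo_quad 1 0 ltac:(lra) ltac:(lra) ltac:(lra)) as Q1.
  pose proof (geo_quad (5/4) (3/4) ltac:(lra) ltac:(lra) ltac:(lra)) as Q2.
  pose proof (geo_quad (5/4) (-3/4) ltac:(lra) ltac:(lra) ltac:(lra)) as Q3.
  assert (A00 : lor (A e0) e0 = - K) by lra.
  assert (A11 : lor (A e1) e1 = K) by lra.
  assert (A01 : lor (A e1) e0 = - beta) by (unfold beta; lra).
  pose proof (expansion e0 e1 u (A e0) HO) as X0.
  pose proof (expansion e0 e1 u (A e1) HO) as X1.
  rewrite A00 in X0. rewrite A11, A01 in X1. fold beta in X0.
  pose proof (Aiso e0 e0) as I0. pose proof (Aiso e1 e1) as I1. pose proof (Aiso e0 e1) as I01.
  destruct HO as (H1&H2&H3&H4&H5&H6).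
  rewrite X0, X1 in I01. rewrite X0 in I0. rewrite X1 in I1.
  rewrite lor_comb_comb in I0, I1, I01 by exact HO.
  set (g0 := lor (A e0) u) in *. set (g1 := lor (A e1) u) in *.
  assert (G : g0 * g0 + g1 * g1 = 0) by nra.
  assert (g0 = 0) by nra. assert (g1 = 0) by nra.
  split; [|split].
  - rewrite X0. f_equal; [lra|auto].
  - rewrite X1. f_equal; [lra|auto].
  - nra.
Qed.


Lemma K_pos : 0 < K.
Proof. unfold K. pose proof (exp_pos L). assert (0 < / exp L) by (apply Rinv_0_lt_compat; lra). lra. Qed.

Lemma geo_u : exists eps, A u = comb e0 e1 u 0 0 eps /\ eps * eps = 1.
Proof.
  destruct geo_struct as (S0 & S1 & SB).
  pose proof K_pos as KP.
  pose proof (expansion e0 e1 u (A u) HO) as XU.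
  pose proof (Aiso u e0) as I0. pose proof (Aiso u e1) as I1. pose proof (Aiso u u) as I2.
  pose proof HO as (H1&H2&H3&H4&H5&H6).
  rewrite XU, S0 in I0. rewrite XU, S1 in I1. rewrite XU in I2.
  rewrite lor_comb_comb in I0, I1, I2 by exact HO.
  rewrite (lor_sym u e0), H5 in I0. rewrite (lor_sym u e1), H6 in I1. rewrite H3 in I2.
  set (al := lor (A u) e0) in *. set (bb := lor (A u) e1) in *. set (gg := lor (A u) u) in *.
  assert (E1 : al * (K * K - beta * beta) = 0).
  { replace (al * (K * K - beta * beta)) with
      (K * (- - al * K + bb * beta + gg * 0) - beta * (- - al * beta + bb * K + gg * 0)) by ring.
    rewrite I0, I1. ring. }
  rewrite SB in E1. replace (K * K - (K * K - 1)) with 1 in E1 by ring.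
  assert (Hal : al = 0) by lra.
  rewrite Hal in I1. 
  assert (Hbb : bb * K = 0) by lra.
  apply Rmult_integral in Hbb. destruct Hbb as [Hbb|Hbb]; [|lra].
  exists gg. split.
  - rewrite XU, Hal, Hbb. f_equal. ring.
  - rewrite Hal, Hbb in I2. lra.
Qed.

Lemma gpow_form eps : A u = comb e0 e1 u 0 0 eps -> forall k p q r,
  gpow A k (comb e0 e1 u p q r) =
  comb e0 e1 u (p * fst (CB K beta k) + q * snd (CB K beta k))
               (p * snd (CB K beta k) + q * fst (CB K beta k)) (r * eps ^ k).
Proof.
  intros HU. destruct geo_struct as (S0 & S1 & SB).
  induction k; intros p q r.
  - simpl. f_equal; ring.
  - change (gpow A (S k) (comb e0 e1 u p q r)) with (A (gpow A k (comb e0 e1 u p q r))).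
    rewrite IHk, lin_comb by exact Alin. rewrite S0, S1, HU, comb_comb.
    simpl. destruct (CB K beta k) as [c s]; simpl. f_equal; ring.
Qed.

Lemma geo_main x0 : H2 x0 -> forall k, INR k * L - ln 2 <= hdist x0 (gpow A k x0).
Proof.
  intros [Hx0 _] k.
  destruct geo_u as (eps & HU & He).
  destruct geo_struct as (S0 & S1 & SB).
  pose proof K_pos as KP.
  set (X := exp L).
  assert (HX : 1 < X) by (unfold X; rewrite <- exp_0; apply exp_increasing; lra).
  assert (HKX : K = (X + / X) / 2) by reflexivity.
  assert (HB : beta = (X - / X) / 2 \/ beta = - ((X - / X) / 2)).
  { assert (Z : (beta - (X - / X) / 2) * (beta + (X - / X) / 2) = 0).
    { replace ((beta - (X - / X) / 2) * (beta + (X - / X) / 2)) with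
        (beta * beta - ((X - / X) / 2) * ((X - / X) / 2)) by ring.
      rewrite SB, HKX. field. lra. }
    apply Rmult_integral in Z. destruct Z; [left|right]; lra. }
  assert (HXi : 0 < / X) by (apply Rinv_0_lt_compat; lra).
  assert (Pp : 0 < K + beta) by (rewrite HKX; destruct HB as [E|E]; rewrite E; lra).
  assert (Pm : 0 < K - beta) by (rewrite HKX; destruct HB as [E|E]; rewrite E; lra).
  set (C := fst (CB K beta k)). set (Bk := snd (CB K beta k)).
  assert (HC : C = ((K + beta) ^ k + (K - beta) ^ k) / 2).
  { rewrite <- CB_sum, <- CB_diff. unfold C. lra. }
  assert (HCX : X ^ k / 2 <= C).
  { rewrite HC. pose proof (pow_lt (K + beta) k Pp). pose proof (pow_lt (K - beta) k Pm).
    destruct HB as [E|E].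
    - replace (K + beta) with X by (rewrite HKX, E; field; lra). lra.
    - replace (K - beta) with X by (rewrite HKX, E; field; lra). lra. }
  assert (HC1 : 1 <= C).
  { assert (CC : C * C - Bk * Bk = 1).
    { replace (C * C - Bk * Bk) with ((C + Bk) * (C - Bk)) by ring.
      unfold C, Bk. rewrite CB_sum, CB_diff, <- Rpow_mult_distr.
      replace ((K + beta) * (K - beta)) with (K * K - beta * beta) by ring.
      rewrite SB. replace (K * K - (K * K - 1)) with 1 by ring. apply pow1. }
    assert (0 <= C) by (rewrite HC; pose proof (pow_lt (K + beta) k Pp); pose proof (pow_lt (K - beta) k Pm); lra).
    nra. }
  pose proof (expansion e0 e1 u x0 HO) as XX.
  set (p := - lor x0 e0) in *. set (q := lor x0 e1) in *. set (r := lor x0 u) in *.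
  assert (Hpqr : - p * p + q * q + r * r = -1).
  { pose proof Hx0 as Hx. rewrite XX in Hx. rewrite lor_comb_comb in Hx by exact HO. lra. }
  assert (Heps : eps ^ k * eps ^ k = 1) by (rewrite <- Rpow_mult_distr, He; apply pow1).
  assert (T : C <= - lor x0 (gpow A k x0)).
  { rewrite XX. rewrite (gpow_form eps HU). fold C Bk.
    rewrite lor_comb_comb by exact HO.
    assert (eps ^ k <= 1) by nra.
    assert (0 <= r * r) by apply Rle_0_sqr.
    nra. }
  unfold hdist, acosh.
  set (Tt := - lor x0 (gpow A k x0)) in *.
  assert (0 < X ^ k / 2) by (pose proof (pow_lt X k ltac:(lra)); lra).
  apply Rle_trans with (ln (X ^ k / 2)).
  - unfold Rdiv. assert (0 < X ^ k) by (apply pow_lt; lra).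
    rewrite ln_mult, ln_Rinv, ln_pow by lra. unfold X. rewrite ln_exp. lra.
  - apply ln_le'; [lra|]. pose proof (sqrt_pos (Tt * Tt - 1)). lra.
Qed.

End Geo.

Lemma lin_refl v : lin (refl v).
Proof. split; intros; unfold refl; dv v; try dv x; try dv y; simpl; f_equal; [f_equal| |f_equal|]; ring. Qed.

Lemma isom_refl v : lor v v = 1 -> isom (refl v).
Proof.
  intros Hv x y. unfold refl.
  transitivity (lor x y + 4 * lor x v * lor y v * (lor v v - 1)).
  - revert Hv. dv v; dv x; dv y; simpl; intros; ring.
  - rewrite Hv; ring.
Qed.

Lemma lin_weval n m w : (forall i, lor (nv n m i) (nv n m i) = 1) -> lin (weval n m w).
Proof.
  intros Hn. induction w as [|i w IH]; simpl.
  - split; reflexivity.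
  - destruct IH as [IH1 IH2]. destruct (lin_refl (nv n m i)) as [R1 R2].
    split; intros; unfold gen; rewrite ?IH1, ?IH2, ?R1, ?R2; reflexivity.
Qed.

Lemma isom_weval n m w : (forall i, lor (nv n m i) (nv n m i) = 1) -> isom (weval n m w).
Proof.
  intros Hn. induction w as [|i w IH]; simpl; intros x y; [reflexivity|].
  unfold gen. rewrite isom_refl by auto. apply IH.
Qed.

Lemma ch_rho_ge1 n m : Gamma_defined n m -> 1 <= ch_rho n m.
Proof.
  intros (H3 & H4 & _ & H).
  assert (Hnat : (2 * n + 2 * m <= m * n)%nat).
  { nia. }
  apply le_INR in Hnat. rewrite plus_INR, !mult_INR in Hnat. simpl in Hnat.
  apply le_INR in H3. apply le_INR in H4. simpl in H3, H4.
  assert (P := PI_RGT_0).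
  set (N := INR n) in *. set (M := INR m) in *.
  assert (S0 : 0 < sin (PI / N)).
  { apply sin_gt_0. - apply Rdiv_lt_0_compat; lra.
    - apply Rmult_lt_reg_r with N; [lra|]. unfold Rdiv. rewrite Rmult_assoc, Rinv_l by lra. nra. }
  assert (CS : sin (PI / N) <= cos (PI / M)).
  { rewrite <- cos_shift. apply cos_decr_1.
    - apply Rlt_le, Rdiv_lt_0_compat; lra.
    - apply Rmult_le_reg_r with M; [lra|]. unfold Rdiv. rewrite Rmult_assoc, Rinv_l by lra. nra.
    - assert (PI / N <= PI / 2).
      { unfold Rdiv. apply Rmult_le_compat_l; [lra|]. apply Rinv_le_contravar; lra. }
      lra.
    - assert (0 < PI / N) by (apply Rdiv_lt_0_compat; lra). lra.
    - assert (E : PI / 2 - PI / N - PI / M = PI * (M * N - 2 * N - 2 * M) / (2 * M * N)) by (field; lra).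
      assert (0 <= PI * (M * N - 2 * N - 2 * M) / (2 * M * N)).
      { apply Rmult_le_pos; [apply Rmult_le_pos; lra|]. apply Rlt_le, Rinv_0_lt_compat. nra. }
      lra. }
  unfold ch_rho. fold N M. apply Rmult_le_reg_r with (sin (PI / N)); [lra|].
  unfold Rdiv. rewrite Rmult_assoc, Rinv_l by lra. lra.
Qed.

Lemma nv_unit n m i : Gamma_defined n m -> lor (nv n m i) (nv n m i) = 1.
Proof.
  intros H. pose proof (ch_rho_ge1 n m H) as C.
  unfold nv, sh_rho. simpl.
  set (c := ch_rho n m) in *. set (t := 2 * PI * INR i / INR n).
  assert (Q : sqrt (c * c - 1) * sqrt (c * c - 1) = c * c - 1) by (apply sqrt_sqrt; nra).
  rewrite Q. pose proof (sin2_cos2 t) as SC. unfold Rsqr in SC.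
  transitivity (c * c * (sin t * sin t + cos t * cos t) - (c * c - 1)); [ring|]. rewrite SC. ring.
Qed.

Definition lcross (a b : vec) : vec :=
  let '(a1, a2, a3) := a in let '(b1, b2, b3) := b in
  (a2 * b3 - a3 * b2, a3 * b1 - a1 * b3, - (a1 * b2 - a2 * b1)).

Lemma lor_scale_l a x y : lor (vscale a x) y = a * lor x y.
Proof. dv x; dv y; simpl; ring. Qed.
Lemma lor_scale_r a x y : lor x (vscale a y) = a * lor x y.
Proof. dv x; dv y; simpl; ring. Qed.
Lemma lcross_l a b : lor (lcross a b) a = 0.
Proof. dv a; dv b; simpl; ring. Qed.
Lemma lcross_r a b : lor (lcross a b) b = 0.
Proof. dv a; dv b; simpl; ring. Qed.
Lemma lcross_n a b : lor (lcross a b) (lcross a b) = - (lor a a * lor b b - lor a b * lor a b).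
Proof. dv a; dv b; simpl; ring. Qed.

Lemma ONB_exists v : 0 < lor v v -> exists e0 e1 u, ONB e0 e1 u /\ 0 < snd e0 /\
  (forall x, lor x u = 0 -> lor x v = 0).
Proof.
  intros Hv.
  set (w := let '(v1, v2, v3) := v in (v3 * v1, v3 * v2, v1 * v1 + v2 * v2)).
  assert (Hw : lor w w < 0 /\ lor w v = 0 /\ 0 < snd w).
  { unfold w. revert Hv. dv v. simpl. intros Hv.
    assert (0 < a * a + b * b) by nra.
    split; [|split].
    - replace ((c * a) * (c * a) + (c * b) * (c * b) - (a * a + b * b) * (a * a + b * b))
        with (- ((a * a + b * b) * (a * a + b * b - c * c))) by ring.
      assert (0 < (a * a + b * b) * (a * a + b * b - c * c)) by (apply Rmult_lt_0_compat; lra). lra.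
    - ring.
    - lra. }
  destruct Hw as (Hw1 & Hw2 & Hw3). clearbody w.
  set (sw := sqrt (- lor w w)). set (sv := sqrt (lor v v)).
  assert (Psw : 0 < sw) by (apply sqrt_lt_R0; lra).
  assert (Psv : 0 < sv) by (apply sqrt_lt_R0; lra).
  assert (Qsw : sw * sw = - lor w w) by (apply sqrt_sqrt; lra).
  assert (Qsv : sv * sv = lor v v) by (apply sqrt_sqrt; lra).
  set (e0 := vscale (/ sw) w). set (u := vscale (/ sv) v).
  assert (E00 : lor e0 e0 = -1).
  { unfold e0. rewrite lor_scale_l, lor_scale_r. rewrite <- (Ropp_involutive (lor w w)), <- Qsw. field. lra. }
  assert (Euu : lor u u = 1).
  { unfold u. rewrite lor_scale_l, lor_scale_r. rewrite <- Qsv. field. lra. }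
  assert (E0u : lor e0 u = 0).
  { unfold e0, u. rewrite lor_scale_l, lor_scale_r, Hw2. ring. }
  exists e0, (lcross u e0), u. split; [|split].
  - unfold ONB. rewrite lcross_n, Euu, E00, (lor_sym u e0), E0u.
    rewrite (lor_sym e0 (lcross u e0)), lcross_r, lcross_l.
    repeat split; auto; ring.
  - unfold e0. revert Hw3. dv w. simpl. intros. apply Rmult_lt_0_compat; auto. apply Rinv_0_lt_compat; auto.
  - intros x Hx. unfold u in Hx. rewrite lor_scale_r in Hx.
    apply Rmult_integral in Hx. destruct Hx as [Hx|Hx]; auto.
    exfalso. assert (0 < / sv) by (apply Rinv_0_lt_compat; auto). lra.
Qed.

Lemma sumR_app l1 l2 : sumR (l1 ++ l2) = sumR l1 + sumR l2.
Proof. induction l1; simpl; [ring|rewrite IHl1; ring]. Qed.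
Lemma prodR_app l1 l2 : prodR (l1 ++ l2) = prodR l1 * prodR l2.
Proof. induction l1; simpl; [ring|rewrite IHl1; ring]. Qed.

Lemma sumR_nonneg l : (forall y, In y l -> 0 <= y) -> 0 <= sumR l.
Proof. induction l; simpl; intros H; [lra|]. pose proof (H a (or_introl eq_refl)).
  assert (0 <= sumR l) by (apply IHl; auto). lra. Qed.

Lemma sumR_ge l x : (forall y, In y l -> 0 <= y) -> In x l -> x <= sumR l.
Proof. induction l; simpl; intros H Hx; [contradiction|].
  destruct Hx as [<-|Hx].
  - assert (0 <= sumR l) by (apply sumR_nonneg; auto). lra.
  - pose proof (H a (or_introl eq_refl)). assert (x <= sumR l) by (apply IHl; auto). lra. Qed.

Lemma words_valid n k w : In w (words n k) -> valid_word n w /\ length w = k.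
Proof.
  revert w; induction k; simpl; intros w H.
  - destruct H as [<-|[]]. split; [constructor|reflexivity].
  - apply in_flat_map in H. destruct H as (i & Hi & Hw). apply in_map_iff in Hw.
    destruct Hw as (w' & <- & Hw'). apply IHk in Hw'. destruct Hw' as [V Ln].
    apply in_seq in Hi. split; [constructor; [lia|auto]|simpl; lia].
Qed.

Lemma valid_in_words n w : valid_word n w -> In w (words n (length w)).
Proof.
  induction w as [|i w IH]; simpl; intros H; [auto|].
  inversion H; subst. apply in_flat_map. exists i. split; [apply in_seq; lia|].
  apply in_map. auto.
Qed.

Section Prob.
Variables (n : nat) (mu : nat -> R).
Hypotheses (Hmu_pos : forall i, (i < n)%nat -> 0 < mu i) (Hmu_sum : sumR (map mu (seq 0 n)) = 1).

Lemma mu_le1 i : (i < n)%nat -> mu i <= 1.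
Proof.
  intros Hi. rewrite <- Hmu_sum. apply sumR_ge.
  - intros y Hy. apply in_map_iff in Hy. destruct Hy as (j & <- & Hj). apply in_seq in Hj.
    left; apply Hmu_pos; lia.
  - apply in_map, in_seq; lia.
Qed.

Lemma prod_bounds w : valid_word n w -> 0 < prodR (map mu w) <= 1.
Proof.
  induction w as [|i w IH]; simpl; intros H; [lra|]. inversion H; subst.
  destruct (IH H3). pose proof (Hmu_pos i H2). pose proof (mu_le1 i H2).
  split; [nra|]. nra.
Qed.

Lemma fhw_nonneg m x k w : In w (words n k) -> 0 <= first_hit_weight n m mu x w.
Proof.
  intros H. apply words_valid in H. destruct H as [V _].
  unfold first_hit_weight, indic. destruct (excluded_middle_informative _);
  destruct (prod_bounds w V); nra.
Qed.

Lemma inner_nonneg m x k : 0 <= sumR (map (first_hit_weight n m mu x) (words n k)).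
Proof.
  apply sumR_nonneg. intros y Hy. apply in_map_iff in Hy. destruct Hy as (w & <- & Hw).
  eapply fhw_nonneg; eauto.
Qed.

Lemma hit_upto_incr m x N : hit_upto n m mu x N <= hit_upto n m mu x (S N).
Proof.
  unfold hit_upto. rewrite (seq_S (S N)), map_app, sumR_app.
  match goal with |- _ <= _ + sumR ?l => assert (0 <= sumR l) end.
  { apply sumR_nonneg. intros y Hy. apply in_map_iff in Hy. destruct Hy as (k & <- & _).
    apply inner_nonneg. }
  lra.
Qed.

Lemma min_ex (P : nat -> Prop) j : P j -> exists j0, P j0 /\ (j0 <= j)%nat /\ forall i, (i < j0)%nat -> ~ P i.
Proof.
  induction j as [j IH] using (well_founded_induction Wf_nat.lt_wf). intros Hj.
  destruct (Classical_Prop.classic (exists i, (i < j)%nat /\ P i)) as [(i & Hi & Pi)|N].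
  - destruct (IH i Hi Pi) as (j0 & A & B & C). exists j0. split; [auto|split; [lia|auto]].
  - exists j. split; [auto|split; [lia|]]. intros i Hi Pi. apply N. eauto.
Qed.

Lemma hit_upto_ge m x N w : valid_word n w -> weval n m w = x -> (length w <= N)%nat ->
  prodR (map mu w) <= hit_upto n m mu x N.
Proof.
  intros V E Ln.
  destruct (min_ex (fun j => weval n m (firstn j w) = x) (length w)) as (j0 & P0 & Hj0 & Hmin).
  { rewrite firstn_all. auto. }
  set (w' := firstn j0 w).
  assert (Lw' : length w' = j0) by (apply firstn_length_le; auto).
  pose proof (firstn_skipn j0 w) as FS.
  assert (V' : valid_word n w' /\ valid_word n (skipn j0 w)).
  { unfold valid_word in *. rewrite <- FS in V. apply Forall_app in V. auto. }
  destruct V' as [V1 V2].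
  assert (Pw : prodR (map mu w) <= prodR (map mu w')).
  { rewrite <- FS, map_app, prodR_app. fold w'.
    destruct (prod_bounds _ V1). destruct (prod_bounds _ V2). nra. }
  assert (F : first_hit_weight n m mu x w' = prodR (map mu w')).
  { unfold first_hit_weight, indic. destruct (excluded_middle_informative _) as [_|NN]; [ring|].
    exfalso. apply NN. split; [auto|]. intros i Hi. rewrite Lw' in Hi.
    unfold w'. rewrite firstn_firstn. replace (Init.Nat.min i j0) with i by lia. apply Hmin; auto. }
  apply Rle_trans with (prodR (map mu w')); [auto|].
  rewrite <- F. unfold hit_upto.
  apply Rle_trans with (sumR (map (first_hit_weight n m mu x) (words n j0))).
  - apply sumR_ge.
    + intros y Hy. apply in_map_iff in Hy. destruct Hy as (w0 & <- & Hw0). eapply fhw_nonneg; eauto.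
    + apply in_map. rewrite <- Lw'. apply valid_in_words; auto.
  - apply sumR_ge.
    + intros y Hy. apply in_map_iff in Hy. destruct Hy as (k & <- & _). apply inner_nonneg.
    + apply in_map_iff. exists j0. split; [auto|]. apply in_seq. lia.
Qed.

Lemma d_mu_le m x N P0 : 0 < P0 -> P0 <= 1 -> P0 <= hit_upto n m mu x N ->
  d_mu_e n m mu x <= - ln P0.
Proof.
  intros H0 H1 H2.
  assert (L0 : ln P0 <= 0) by (rewrite <- ln_1; apply ln_le'; lra).
  unfold d_mu_e, F_mu_e, hit_prob.
  pose proof (ex_lim_seq_incr _ (hit_upto_incr m x)) as EX.
  apply Lim_seq_correct in EX.
  destruct (Lim_seq (hit_upto n m mu x)) as [l| |] eqn:EL; simpl.
  - pose proof (is_lim_seq_incr_compare _ l EX (hit_upto_incr m x) N).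
    assert (ln P0 <= ln l) by (apply ln_le'; lra). lra.
  - rewrite ln_nonpos by lra. lra.
  - rewrite ln_nonpos by lra. lra.
Qed.

End Prob.

Fixpoint rep (s : list nat) (k : nat) : list nat :=
  match k with O => [] | S k => s ++ rep s k end.

Lemma weval_app n m w1 w2 x : weval n m (w1 ++ w2) x = weval n m w1 (weval n m w2 x).
Proof. induction w1; simpl; [auto|rewrite IHw1; auto]. Qed.

Lemma weval_rep n m s k : weval n m (rep s k) = gpow (weval n m s) k.
Proof.
  induction k; simpl; apply FunctionalExtensionality.functional_extensionality; intros x; [reflexivity|].
  rewrite weval_app, IHk. reflexivity.
Qed.

Lemma rep_valid n s k : valid_word n s -> valid_word n (rep s k).
Proof. intros V; induction k; simpl; [constructor|]. apply Forall_app; auto. Qed.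

Lemma rep_len s k : length (rep s k) = (k * length s)%nat.
Proof. induction k; simpl; auto. rewrite length_app, IHk. lia. Qed.

Lemma rep_prod (mu : nat -> R) s k : prodR (map mu (rep s k)) = prodR (map mu s) ^ k.
Proof. induction k; simpl; auto. rewrite map_app, prodR_app, IHk. ring. Qed.

Lemma ln_prod n (mu : nat -> R) s : (forall i, (i < n)%nat -> 0 < mu i) -> valid_word n s ->
  ln (prodR (map mu s)) = sumR (map (fun i => ln (mu i)) s).
Proof.
  intros Hp. induction s as [|i s IH]; simpl; intros V; [apply ln_1|]. inversion V; subst.
  assert (0 < prodR (map mu s)).
  { clear IH V. induction s as [|j s IH2]; simpl; [lra|]. inversion H2; subst.
    apply Rmult_lt_0_compat; auto. }
  rewrite ln_mult, IH; auto.
Qed.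

Theorem lemma3 (n m : nat) (Hnm : Gamma_defined n m)
  (mu : nat -> R)
  (Hmu_pos : forall i, (i < n)%nat -> 0 < mu i)
  (Hmu_sum : sumR (map mu (seq 0 n)) = 1)
  (g : vec -> vec) (Hg : in_Gamma n m g)
  (L : R) (Hhyp : hyperbolic_with g L)
  (s : list nat) (Hs_valid : valid_word n s) (Hs_eval : weval n m s = g)
  (Hs_len : word_length_is n m g (length s))
  (HL : L > - sumR (map (fun i => ln (mu i)) s))
  (x0 : vec) (Hx0 : H2 x0) (Hstab : trivial_stabilizer n m x0) :
  forall M : R, exists k : nat, (1 <= k)%nat /\
    Rabs (d_mu_e n m mu (gpow g k) - d_geo_e x0 (gpow g k)) > M.
Proof.
  intros M.
  destruct Hhyp as [HL0 (v & Hv & Hax)].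
  destruct (ONB_exists v Hv) as (e0 & e1 & u & HO & He0 & Huv).
  assert (Hn : forall i, lor (nv n m i) (nv n m i) = 1) by (intros; apply nv_unit; auto).
  assert (Glin : lin g) by (rewrite <- Hs_eval; apply lin_weval; auto).
  assert (Giso : isom g) by (rewrite <- Hs_eval; apply isom_weval; auto).
  assert (Hax' : forall x, H2 x -> lor x u = 0 -> hdist x (g x) = L).
  { intros x Hx Hu. apply Hax. split; auto. }
  assert (G : forall k, INR k * L - ln 2 <= hdist x0 (gpow g k x0)).
  { intros k. eapply geo_main; eauto. }
  set (P := prodR (map mu s)).
  destruct (prod_bounds n mu Hmu_pos Hmu_sum s Hs_valid) as [P0 P1]. fold P in P0, P1.
  assert (HP : ln P = sumR (map (fun i => ln (mu i)) s)) by (apply ln_prod with n; auto).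
  set (S := - ln P).
  assert (HLS : 0 < L - S) by (unfold S; lra).
  destruct (INR_unbounded ((M + ln 2) / (L - S))) as [N HN].
  exists (Datatypes.S N). split; [lia|].
  set (k := Datatypes.S N).
  assert (Hk : (M + ln 2) / (L - S) < INR k) by (unfold k; rewrite S_INR; lra).
  assert (Hk2 : M + ln 2 < INR k * (L - S)).
  { apply Rmult_lt_compat_r with (r := L - S) in Hk; auto.
    unfold Rdiv in Hk. rewrite Rmult_assoc, Rinv_l in Hk by lra. lra. }
  assert (D : d_mu_e n m mu (gpow g k) <= INR k * S).
  { assert (Pk0 : 0 < P ^ k) by (apply pow_lt; auto).
    assert (Pk1 : P ^ k <= 1) by (rewrite <- (pow1 k); apply pow_incr; lra).
    apply Rle_trans with (- ln (P ^ k)).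
    - apply d_mu_le with (N := (k * length s)%nat); auto.
      unfold P. rewrite <- rep_prod. apply hit_upto_ge; auto.
      + apply rep_valid; auto.
      + rewrite weval_rep, Hs_eval. reflexivity.
      + rewrite rep_len. lia.
    - rewrite ln_pow by auto. unfold S. lra. }
  unfold d_geo_e. pose proof (G k) as Gk.
  rewrite Rabs_minus_sym.
  apply Rlt_le_trans with (hdist x0 (gpow g k x0) - d_mu_e n m mu (gpow g k)); [|apply Rle_abs].
  lra.
Qed.
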